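(* Let $\langle \Lambda, \mathcal{S}\rangle$ be a measurable space and let $P_{00}, P_{0+}, P_{+0}, P_{++}$ be four probability measures on it that satisfy the Preparation Uninformativeness Condition, i.e. there is a measure $Q$ on $\langle \Lambda,\mathcal{S}\rangle$ dominating all four, with densities $\mu_{xy} = dP_{xy}/dQ$ ($x,y\in\{0,+\}$) such that for all $\lambda \in \Lambda$, $$\mu_{00}(\lambda)\,\mu_{++}(\lambda) = \mu_{0+}(\lambda)\,\mu_{+0}(\lambda).$$ Suppose there is an experiment $E$ with finite outcome set $K$, given by measurable functions $p_k:\Lambda\to[0,1]$ ($k\in K$) with $\sum_{k\in K} p_k(\lambda)=1$ for all $\lambda$, such that every outcome $k\in K$ is precluded by some $P_{xy}$, i.e. for each $k$ there are $x,y\in\{0,+\}$ with $\int_\Lambda p_k\, dP_{xy} = 0$. Then $P_{00}$ and $P_{++}$ have null overlap, and $P_{0+}$ and $P_{+0}$ have null overlap; that is, $\int_\Lambda \min(\mu_{00},\mu_{++})\,dQ = 0$ and $\int_\Lambda \min(\mu_{0+},\mu_{+0})\,dQ = 0$ (equivalently, the total variation distances $\delta(P_{00},P_{++})$ and $\delta(P_{0+},P_{+0})$ equal $1$).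
   Context: The total variation (statistical) distance between probability measures $P,Q'$ with densities $p,q$ with respect to a common dominating measure $\nu$ is $\delta(P,Q')=\sup_{A\in\mathcal{S}}|P(A)-Q'(A)| = 1-\int_\Lambda \min(p,q)\,d\nu$; the classical overlap is $\omega(P,Q')=1-\delta(P,Q')$, and ''null overlap'' means $\omega=0$. *)

(* Defs.v *)
From HB Require Import structures.
From mathcomp Require Import all_boot all_order all_algebra.
From mathcomp Require Import all_classical all_reals all_analysis.
Set Implicit Arguments. Unset Strict Implicit. Unset Printing Implicit Defensive.
Import Order.TTheory GRing.Theory Num.Theory.
Local Open Scope classical_set_scope.
Local Open Scope ring_scope.

(* Convention: the index set {0,+} is encoded as bool, false = 0, true = +. *)

Definition is_density d (T : measurableType d) (R : realType)
  (Q : {measure set T -> \bar R}) (P : set T -> \bar R) (f : T -> R) : Prop :=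
  measurable_fun setT f /\ (forall x, 0 <= f x) /\
  forall A, measurable A -> P A = (\int[Q]_(x in A) (f x)%:E)%E.

Definition PUC d (T : measurableType d) (R : realType)
  (mu : bool -> bool -> T -> R) : Prop :=
  forall l, mu false false l * mu true true l = mu false true l * mu true false l.

Definition experiment d (T : measurableType d) (R : realType) (K : finType)
  (p : K -> T -> R) : Prop :=
  (forall k, measurable_fun setT (p k)) /\
  (forall k l, 0 <= p k l <= 1) /\
  (forall l, \sum_(k : K) p k l = 1).

Definition precluded d (T : measurableType d) (R : realType)
  (P : {measure set T -> \bar R}) (f : T -> R) : Prop :=
  (\int[P]_x (f x)%:E = 0)%E.

Definition overlap d (T : measurableType d) (R : realType)
  (Q : {measure set T -> \bar R}) (f g : T -> R) : \bar R :=
  (\int[Q]_x (Num.min (f x) (g x))%:E)%E.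

(* Main.v *)
Require Import Defs.
From HB Require Import structures.
From mathcomp Require Import all_boot all_order all_algebra.
From mathcomp Require Import all_classical all_reals all_analysis.
Import Order.TTheory GRing.Theory Num.Theory.
Local Open Scope classical_set_scope.
Local Open Scope ring_scope.

Lemma min0_of_mul0 (R : realDomainType) (a b : R) :
  0 <= a -> 0 <= b -> a * b = 0 -> Num.min a b = 0.
Proof.
move=> a0 b0 /eqP; rewrite mulf_eq0 => /orP[/eqP->|/eqP->].
  by rewrite min_l.
by rewrite min_r.
Qed.

Lemma step_k (d : measure_display) (T : measurableType d) (R : realType)
  (Pk : probability T R) (Q : {measure set T -> \bar R}) (m : T -> R)
  (f : T -> R) :
  is_density Q Pk m -> measurable_fun setT f -> (forall l, 0 <= f l) ->
  precluded Pk f ->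
  \forall l \ae Q, f l != 0 -> m l = 0.
Proof.
move=> [mm [m0 hP]] mf f0 hpre.
have h1 : ae_eq Pk setT (fun x => (f x)%:E) (cst 0%E).
  apply/(ae_eq_integral_abs Pk measurableT); first exact/measurable_realfun.measurable_EFinP.
  rewrite -[RHS]hpre; apply: eq_integral => x _.
  by rewrite gee0_abs // lee_fin.
case: h1 => N1 [mN1 PN1 sN1].
have h2 : ae_eq Q N1 (fun x => (m x)%:E) (cst 0%E).
  apply/(ae_eq_integral_abs Q mN1).
    by apply/measurable_realfun.measurable_EFinP; exact: measurable_funS mm.
  rewrite -PN1; transitivity (\int[Q]_(x in N1) (m x)%:E)%E.
    by apply: eq_integral => x _; rewrite gee0_abs // lee_fin.
  exact/esym/hP.
case: h2 => N2 [mN2 QN2 sN2].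
exists N2; split => // l /= H; apply: sN2 => /= H2; apply: H => fl.
have : N1 l -> m l = 0.
  by move=> /H2 [].
apply.
apply: sN1 => /= /(_ I) [] /eqP; by rewrite (negbTE fl).
Qed.

Theorem theorem1 (d : measure_display) (T : measurableType d) (R : realType)
  (P : bool -> bool -> probability T R)
  (Q : {measure set T -> \bar R})
  (mu : bool -> bool -> T -> R)
  (hdens : forall x y, is_density Q (P x y) (mu x y))
  (hpuc : PUC mu)
  (K : finType) (p : K -> T -> R)
  (hexp : experiment p)
  (hprec : forall k : K, exists x y, precluded (P x y) (p k)) :
  overlap Q (mu false false) (mu true true) = 0%E /\
  overlap Q (mu false true) (mu true false) = 0%E.
Proof.
case: hexp => [pm [p01 psum]].
have hk : forall k, \forall l \ae Q, p k l != 0 -> exists x y, mu x y l = 0.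
  move=> k; have [x [y hxy]] := hprec k.
  have f0 : forall l, 0 <= p k l by move=> l; case/andP: (p01 k l).
  move: (@step_k _ _ _ _ _ _ _ (hdens x y) (pm k) f0 hxy); apply: filterS.
  by move=> l H /H ?; exists x, y.
have hall := filter_forall (ae_filter_ringOfSetsType Q) hk.
have mu0 : forall x y l, 0 <= mu x y l.
  by move=> x y l; have [_ [+ _]] := hdens x y; apply.
have key : \forall l \ae Q,
    Num.min (mu false false l) (mu true true l) = 0 /\
    Num.min (mu false true l) (mu true false l) = 0.
  move: hall; apply: filterS; move=> l H.
  have [k pk] : exists k, p k l != 0.
    apply: contrapT => H0.
    have : \sum_(k : K) p k l = 0.
      apply: big1 => k _; apply/eqP; apply: contrapT => ne.
      by apply: H0; exists k; apply/negP.
    by rewrite psum => /eqP; rewrite oner_eq0.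
  have [x [y hxy]] := H k pk.
  have hp := hpuc l.
  have prod0 : mu false false l * mu true true l = 0.
    have : (mu false false l * mu true true l) ^+ 2 = 0.
      rewrite expr2 {2}hp.
      by move: hxy; case: x; case: y => ->; rewrite ?(mul0r, mulr0).
    by move/eqP; rewrite expf_eq0 /= => /eqP.
  split; apply: min0_of_mul0 => //; by rewrite -hp.
have mmu x y : measurable_fun setT (mu x y) by have [] := hdens x y.
split.
- rewrite /overlap (ae_eq_integral (cst 0%E)) ?integral0 //.
  + apply/measurable_realfun.measurable_EFinP; exact: measurable_realfun.measurable_minr.
  + move: key; apply: filterS; move=> l [H _] _; by rewrite H.
- rewrite /overlap (ae_eq_integral (cst 0%E)) ?integral0 //.
  + apply/measurable_realfun.measurable_EFinP; exact: measurable_realfun.measurable_minr.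
  + move: key; apply: filterS; move=> l [_ H] _; by rewrite H.
Qed.
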